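(* Let $V$ be an inhomogeneous $Y$-random evolution, $s\in J$ and $\omega \in \Omega$. Then $V(\cdot,\cdot)(\omega)$ is an inhomogeneous $Y$-semigroup. Further, if $V$ is regular, then $u \mapsto V(s,u)(\omega)$ is $Y$-strongly RCLL on $J(s)$, i.e. for every $f \in Y$, $u \mapsto V(s,u)(\omega)f$ belongs to $D(J(s),(Y,\|\cdot\|))$; more precisely, for $f \in Y$, \[ V(s,u^-)f=V(s,u)f \ \text{ if } u \notin \{T_{n}(s): n \in \mathbb{N}\},\qquad V(s, T_{n+1}(s))f= V(s, T_{n+1}(s)^-) D(x_{n}(s),x_{n+1}(s))f \ \ \forall n \in \mathbb{N}, \] where $V(s,t^-)f:=\lim_{u \uparrow t} V(s,u)f$.
   Context: $(Y,\|\cdot\|)$ is a real separable Banach space with Borel $\sigma$-algebra $\mathcal Y$, $(Y_1,\|\cdot\|_{Y_1})$ a real separable Banach space continuously embedded in $Y$; $J$ is $\mathbb{R}^+$ or $[0,T_\infty]$, $\Delta_J=\{(s,t)\in J^2:s\le t\}$, $J(s)=\{t\in J:t\ge s\}$; $D(J(s),Y)$ is the space of right-continuous functions with left limits. An inhomogeneous $Y$-semigroup is a map $\Gamma:\Delta_J\to\mathcal B(Y)$ with $\Gamma(t,t)=I$ and $\Gamma(s,r)\Gamma(r,t)=\Gamma(s,t)$ for $s\le r\le t$. Generator: $\mathcal D(A_\Gamma(t))$ is the set of $f\in Y$ such that $\lim_{h\downarrow0,\,t+h\in J}h^{-1}(\Gamma(t,t+h)-I)f$ and $\lim_{h\downarrow0,\,t-h\in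 J}h^{-1}(\Gamma(t-h,t)-I)f$ exist and are equal ($=A_\Gamma(t)f$), $\mathcal D(A_\Gamma)=\bigcap_t\mathcal D(A_\Gamma(t))$. $\Gamma$ is regular if $Y_1\subseteq\mathcal D(A_\Gamma)$; $\Gamma(s,t)Y_1\subseteq Y_1$ and $u\mapsto\Gamma(u,t)f$ is $\|\cdot\|_{Y_1}$-continuous for $f\in Y_1$; $u\mapsto\Gamma(s,u)f$ is $Y$-continuous on $J(s)$ for $f\in Y$; and $u\mapsto\Gamma(s,u)A_\Gamma(u)f$ is Bochner integrable on $[s,t]$ for $f\in Y_1$. Probabilistic setting: $(\Omega,\mathcal F,\mathbb P)$ complete; $X$ finite with all subsets as $\sigma$-algebra $\mathcal X$; $(x_n,T_n)_{n\ge0}$ a Markov renewal process ($x_n\in X$, $T_0=0$, $T_n=\sum_{k\le n}\tau_k$, $\tau_k>0$) with semi-Markov kernel $Q$; $N(t)=\sup\{n:T_n\le t\}$, $\Omega$ restricted to the full-measure event $\{N(t)<\infty\ \forall t\in\mathbb Q\}$; $x(t)=x_{N(t)}$; $N_s(t)=N(t)-N(s)$, $T_0(s)=s$, $T_n(s)=T_{N(s)+n}$ ($n\ge1$), $x_n(s)=x(T_n(s))$. $(\Gamma_x)_{x\in X}$ inhomogeneous $Y$-semigroups with generators $A_x$, with $(r,t,x,f)\mapsto\Gamma_x(r\wedge t,r\vee t)f$ jointly measurable; $(D(x,y))_{x,y}\subseteq\mathcal B(Y)$ contractions with $(x,y,f)\mapsto D(x,y)f$ measurable. The inhomogeneous $Y$-random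 evolution is $V(s,t)=\big[\prod_{k=1}^{N_s(t)}\Gamma_{x_{k-1}(s)}(T_{k-1}(s),T_k(s))D(x_{k-1}(s),x_k(s))\big]\Gamma_{x(t)}(T_{N_s(t)}(s),t)$ (product ordered left to right, empty product $I$), defined pathwise on $\Delta_J\times\Omega$. $V$ is regular if every $\Gamma_x$ is regular. *)

(* Defs.v *)
From HB Require Import structures.
From mathcomp Require Import all_boot all_order all_algebra.
From mathcomp Require Import all_classical all_reals all_analysis.
From mathcomp Require Import measurable_realfun.
Set Implicit Arguments. Unset Strict Implicit. Unset Printing Implicit Defensive.
Import Order.TTheory GRing.Theory Num.Theory.
Import numFieldNormedType.Exports.
Local Open Scope classical_set_scope.
Local Open Scope ring_scope.

Section Defs.
Variable R : realType.

Definition time_domain (J : set R) : Prop :=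
  J = [set t | 0 <= t] \/ exists Tinf : R, 0 < Tinf /\ J = [set t | 0 <= t <= Tinf].

Definition Jfrom (J : set R) (s : R) : set R := [set t | J t /\ s <= t].

Section Banach.
Variable Y : completeNormedModType R.

Definition separable_space (Z : completeNormedModType R) : Prop :=
  exists S : set Z, countable S /\ closure S = setT.

Definition bounded_linear_op (A : Y -> Y) : Prop :=
  (forall (a : R) (f g : Y), A (a *: f + g) = a *: A f + A g) /\
  exists M : R, forall f, `|A f| <= M * `|f|.

Definition contraction_op (A : Y -> Y) : Prop :=
  bounded_linear_op A /\ forall f, `|A f| <= `|f|.

Definition cont_embedding (Y1 : completeNormedModType R) (i : Y1 -> Y) : Prop :=
  (forall (a : R) (f g : Y1), i (a *: f + g) = a *: i f + i g) /\
  injective i /\ exists C : R, forall g, `|i g| <= C * `|g|.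

Definition is_Ysemigroup (J : set R) (G : R -> R -> Y -> Y) : Prop :=
  (forall s t, J s -> J t -> s <= t -> bounded_linear_op (G s t)) /\
  (forall t, J t -> G t t = id) /\
  (forall s r t, J s -> J r -> J t -> s <= r -> r <= t ->
      G s r \o G r t = G s t).

(** g = A_G(t) f : both one-sided difference quotients converge to g
    (each one whenever it is meaningful, i.e. t+h (resp. t-h) lies in J
    for all small h > 0). *)
Definition is_gen (J : set R) (G : R -> R -> Y -> Y) (t : R) (f g : Y) : Prop :=
  ((exists e : R, 0 < e /\ forall h, 0 < h < e -> J (t + h)) ->
     (fun h : R => h^-1 *: (G t (t + h) f - f)) @ 0^'+ --> g) /\
  ((exists e : R, 0 < e /\ forall h, 0 < h < e -> J (t - h)) ->
     (fun h : R => h^-1 *: (G (t - h) t f - f)) @ 0^'+ --> g).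

Definition in_gen_dom (J : set R) (G : R -> R -> Y -> Y) (t : R) (f : Y) : Prop :=
  exists g, is_gen J G t f g.

Definition simple_fn (phi : R -> Y) : Prop :=
  finite_set (range phi) /\
  forall y : Y, measurable (phi @^-1` [set y] : set (measurableTypeR R)).

(** Bochner integrability on A: strongly measurable (a.e. limit on A of simple
    functions) and with integrable norm (dominated by an integrable
    measurable function). *)
Definition bochner_integrable (A : set R) (g : R -> Y) : Prop :=
  (exists phi : nat -> R -> Y, (forall n, simple_fn (phi n)) /\
     exists N : set (measurableTypeR R), measurable N /\
       lebesgue_measure N = 0%E /\
       forall x, A x -> ~ N x -> phi n x @[n --> \oo] --> g x) /\
  (exists h : R -> \bar R, measurable_fun A h /\
     (forall x, A x -> ((`|g x|)%:E <= h x)%E) /\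
     (\int[lebesgue_measure]_(x in A) h x < +oo)%E).

Definition regular_semigroup (Y1 : completeNormedModType R) (i : Y1 -> Y)
    (J : set R) (G : R -> R -> Y -> Y) : Prop :=
  (forall t, J t -> forall g : Y1, in_gen_dom J G t (i g)) /\
  (forall s t, J s -> J t -> s <= t -> forall g : Y1, exists g' : Y1, G s t (i g) = i g') /\
  (forall t, J t -> forall g : Y1, exists h : R -> Y1,
      (forall u, J u -> u <= t -> i (h u) = G u t (i g)) /\
      {within [set u | J u /\ u <= t], continuous h}) /\
  (forall s, J s -> forall f : Y, {within Jfrom J s, continuous (fun u => G s u f)}) /\
  (forall s t, J s -> J t -> s <= t -> forall g : Y1, exists a : R -> Y,
      (forall u, J u -> is_gen J G u (i g) (a u)) /\
      bochner_integrable `[s, t] (fun u => G s u (a u))).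

Definition left_lim (I : set R) (g : R -> Y) (t : R) (l : Y) : Prop :=
  forall e : R, 0 < e -> exists d : R, 0 < d /\
    forall u, I u -> t - d < u < t -> `|g u - l| < e.

Definition RCLL (I : set R) (g : R -> Y) : Prop :=
  forall t, I t ->
    (forall e : R, 0 < e -> exists d : R, 0 < d /\
       forall u, I u -> t <= u < t + d -> `|g u - g t| < e) /\
    ((exists u, I u /\ u < t) -> exists l, left_lim I g t l).

End Banach.

Section Path.
Variable X : finType.

Definition jump_times (tau : nat -> R) (n : nat) : R :=
  \sum_(1 <= k < n.+1) tau k.

(** N(t) = sup {n : T_n <= t} (a maximum when it is finite) *)
Definition Ncount (T : nat -> R) (t : R) : nat :=
  xget 0%N [set n | T n <= t /\ forall m, T m <= t -> (m <= n)%N].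

Definition Nst (T : nat -> R) (s t : R) : nat := (Ncount T t - Ncount T s)%N.

Definition Ts (T : nat -> R) (s : R) (n : nat) : R :=
  if n is 0 then s else T (Ncount T s + n)%N.

Definition xt (T : nat -> R) (x : nat -> X) (t : R) : X := x (Ncount T t).

Definition xs_ (T : nat -> R) (x : nat -> X) (s : R) (n : nat) : X :=
  xt T x (Ts T s n).

Variable Y : completeNormedModType R.

(** ordered product F 1 F 2 ... F m (leftmost applied last) *)
Fixpoint opprod (F : nat -> Y -> Y) (m : nat) : Y -> Y :=
  match m with 0 => id | m'.+1 => opprod F m' \o F m'.+1 end.

Definition rand_evol (G : X -> R -> R -> Y -> Y) (D : X -> X -> Y -> Y)
    (T : nat -> R) (x : nat -> X) (s t : R) : Y -> Y :=
  opprod (fun k => G (xs_ T x s k.-1) (Ts T s k.-1) (Ts T s k)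
                    \o D (xs_ T x s k.-1) (xs_ T x s k)) (Nst T s t)
  \o G (xt T x t) (Ts T s (Nst T s t)) t.

End Path.
End Defs.

(* Main.v *)
Require Import Defs.
From HB Require Import structures.
From mathcomp Require Import all_boot all_order all_algebra.
From mathcomp Require Import all_classical all_reals all_analysis.
From mathcomp Require Import measurable_realfun.
Import Order.TTheory GRing.Theory Num.Theory.
Import numFieldNormedType.Exports.
Local Open Scope classical_set_scope.
Local Open Scope ring_scope.

From mathcomp Require Import lra zify.
Set Implicit Arguments. Unset Strict Implicit.

Lemma within_cont_ed (R : realType) (Y : completeNormedModType R) (A : set R) (f : R -> Y) t :
  {within A, continuous f} -> A t -> forall e : R, 0 < e ->
  exists d : R, 0 < d /\ forall u, A u -> `|u - t| < d -> `|f u - f t| < e.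
Proof.
move=> /subspace_continuousP /(_ t) H At e e0.
move: (H At) => /cvgr_distC_lt /(_ e e0).
rewrite /prop_near1 /= /within /=.
move=> /nbhs_ballP [d d0 Hd].
exists d; split => // u Au ut.
apply: Hd => //.
by rewrite /ball /= distrC.
Qed.

Section Seq.
Variable R : realType.
Variable T : nat -> R.
Hypothesis hT0 : T 0 = 0.
Hypothesis hTS : forall n, T n < T n.+1.
Hypothesis hTub : forall t : R, exists n, t < T n.

Lemma T_lt m n : (m < n)%N -> T m < T n.
Proof.
elim: n => // n IH; rewrite ltnS leq_eqVlt => /orP [/eqP -> //|/IH h].
exact: lt_trans h (hTS n).
Qed.

Lemma T_le m n : (m <= n)%N -> T m <= T n.
Proof. by rewrite leq_eqVlt => /orP [/eqP -> //|/T_lt/ltW]. Qed.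

Lemma T_leE m n : T m <= T n -> (m <= n)%N.
Proof. by move=> h; rewrite leqNgt; apply/negP => /T_lt; rewrite ltNge h. Qed.

Lemma T_ltE m n : T m < T n -> (m < n)%N.
Proof. by move=> h; rewrite ltnNge; apply/negP => /T_le; rewrite leNgt h. Qed.

Lemma T_ge0 n : 0 <= T n.
Proof. by rewrite -hT0; apply: T_le. Qed.

Lemma N_spec t n : T n <= t < T n.+1 -> Ncount T t = n.
Proof.
move=> /andP [h1 h2]; rewrite /Ncount; apply: xget_unique.
  split => // m hm; rewrite -ltnS; apply: T_ltE; exact: le_lt_trans hm h2.
move=> y [hy1 hy2]; apply/eqP; rewrite eqn_leq; apply/andP; split.
  by rewrite -ltnS; apply: T_ltE; exact: le_lt_trans hy1 h2.
exact: hy2.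
Qed.

Lemma N_ex0 t : 0 <= t -> exists n, T n <= t < T n.+1.
Proof.
move=> t0; have [m hm] := hTub t.
elim: m hm => [|m IH hm]; first by rewrite hT0 => h; move: (le_lt_trans t0 h); rewrite ltxx.
case: (ltP t (T m)) => h; first exact: IH.
by exists m; rewrite h hm.
Qed.

Lemma N_ex t : 0 <= t -> T (Ncount T t) <= t < T (Ncount T t).+1.
Proof. by move=> /N_ex0 [n hn]; rewrite (N_spec hn). Qed.

Lemma N_T j : Ncount T (T j) = j.
Proof. by apply: N_spec; rewrite lexx hTS. Qed.

Lemma N_mono s t : 0 <= s -> s <= t -> (Ncount T s <= Ncount T t)%N.
Proof.
move=> s0 st; have /andP [h1 _] := N_ex s0.
have /andP [_ h2] := N_ex (le_trans s0 st).
by rewrite -ltnS; apply: T_ltE; apply: le_lt_trans h2; apply: le_trans st.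
Qed.

End Seq.

Lemma jt_props (R : realType) (tau : nat -> R) :
  (forall k, 0 < tau k.+1) ->
  (forall q : rat, exists n : nat, ratr q < jump_times tau n) ->
  [/\ jump_times tau 0 = 0, forall n, jump_times tau n < jump_times tau n.+1
    & forall t : R, exists n, t < jump_times tau n].
Proof.
move=> hpos hq; split.
- by rewrite /jump_times big_geq.
- move=> n; rewrite /jump_times [X in _ < X]big_nat_recr //=.
  by rewrite ltrDl hpos.
- move=> t; have [n hn] := hq (Num.ceil t + 1)%:~R.
  exists n; apply: le_lt_trans hn.
  rewrite ratr_int intrD; apply: le_trans (ceil_ge t) _.
  by rewrite lerDl.
Qed.

Section Ops.
Variable R : realType.
Variable Y : completeNormedModType R.

Lemma bl_bound (A : Y -> Y) : bounded_linear_op A ->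
  exists M : R, 0 < M /\ forall f, `|A f| <= M * `|f|.
Proof.
move=> [_ [M hM]]; exists (`|M| + 1); split; first by rewrite ltr_pwDr.
move=> f; apply: le_trans (hM f) _; apply: ler_wpM2r => //.
by apply: le_trans (ler_norm M) _; rewrite lerDl.
Qed.

Lemma bl_sub (A : Y -> Y) : bounded_linear_op A -> forall f g, A f - A g = A (f - g).
Proof.
move=> [hl _] f g; have := hl (-1) g f.
by rewrite !scaleN1r [X in _ = X]addrC => <-; rewrite addrC.
Qed.

Lemma bl_id : bounded_linear_op (@id Y).
Proof. by split => //; exists 1 => f; rewrite mul1r. Qed.

Lemma bl_comp (A B : Y -> Y) : bounded_linear_op A -> bounded_linear_op B ->
  bounded_linear_op (A \o B).
Proof.
move=> hA hB; have [MA [MA0 hMA]] := bl_bound hA.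
have [MB [MB0 hMB]] := bl_bound hB.
split; first by move=> a f g /=; rewrite hB.1 hA.1.
exists (MA * MB) => f /=; apply: le_trans (hMA _) _.
by rewrite -mulrA ler_wpM2l // ltW.
Qed.

Lemma opprod_shift (F : nat -> Y -> Y) m n :
  opprod F (m + n) = opprod F m \o opprod (fun k => F (m + k)%N) n.
Proof.
elim: n => [|n IH]; first by rewrite addn0; apply: funext.
by rewrite addnS /= IH; apply: funext => y /=; rewrite addnS.
Qed.

Lemma opprod_ext (F F' : nat -> Y -> Y) n :
  (forall k, (0 < k <= n)%N -> F k = F' k) -> opprod F n = opprod F' n.
Proof.
elim: n => [//|n IH] h /=; rewrite IH ?h ?leqnn //.
by move=> k /andP [k0 kn]; apply: h; rewrite k0 (leq_trans kn).
Qed.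

Lemma opprod_bl (F : nat -> Y -> Y) n :
  (forall k, (0 < k <= n)%N -> bounded_linear_op (F k)) -> bounded_linear_op (opprod F n).
Proof.
elim: n => [|n IH] h /=; first exact: bl_id.
apply: bl_comp; last by apply: h; rewrite leqnn.
by apply: IH => k /andP [k0 kn]; apply: h; rewrite k0 (leq_trans kn).
Qed.

Lemma opprod1 (F : nat -> Y -> Y) n :
  opprod F n.+1 = F 1%N \o opprod (fun k => F k.+1) n.
Proof. by rewrite -add1n opprod_shift. Qed.

End Ops.

Section Evol.
Variable R : realType.
Variable Y : completeNormedModType R.
Variable X : finType.
Variable J : set R.
Variable G : X -> R -> R -> Y -> Y.
Variable D : X -> X -> Y -> Y.
Variable T : nat -> R.
Variable x : nat -> X.
Hypothesis hT0 : T 0 = 0.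
Hypothesis hTS : forall n, T n < T n.+1.
Hypothesis hTub : forall t : R, exists n, t < T n.
Hypothesis hJ : time_domain J.
Hypothesis hG : forall z, is_Ysemigroup J (G z).
Hypothesis hD : forall z z', contraction_op (D z z').

Local Notation N := (Ncount T).
Local Notation P := (Ts T).
Local Notation V := (rand_evol G D T x).

Lemma NEx t : 0 <= t -> T (N t) <= t < T (N t).+1.
Proof. exact: N_ex. Qed.
Lemma NMono s t : 0 <= s -> s <= t -> (N s <= N t)%N.
Proof. exact: N_mono. Qed.
Lemma NT j : N (T j) = j.
Proof. exact: N_T. Qed.
Lemma NSpec t n : T n <= t < T n.+1 -> N t = n.
Proof. exact: N_spec. Qed.
Lemma Tle m n : (m <= n)%N -> T m <= T n.
Proof. exact: T_le. Qed.

Definition Fs s := fun k => G (xs_ T x s k.-1) (Ts T s k.-1) (Ts T s k)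
                    \o D (xs_ T x s k.-1) (xs_ T x s k).

Lemma J_ge0 a : J a -> 0 <= a.
Proof. by case: hJ => [->|[Ti [_ ->]]] //= /andP []. Qed.

Lemma J_itv a b u : J a -> J b -> a <= u -> u <= b -> J u.
Proof.
case: hJ => [->|[Ti [_ ->]]] /= ha hb au ub; first exact: le_trans au.
move: ha hb => /andP [a0 _] /andP [_ bT].
by rewrite (le_trans a0 au) (le_trans ub bT).
Qed.

Lemma TsE s k : (0 < k)%N -> P s k = T (N s + k).
Proof. by case: k. Qed.

Lemma P_lt s k : 0 <= s -> P s k < P s k.+1.
Proof.
move=> s0; case: k => [|k] /=.
  by have /andP [_ h] := NEx s0; rewrite addn1.
by rewrite [X in _ < T X]addnS; apply: hTS.
Qed.

Lemma P_mono s k j : 0 <= s -> (k <= j)%N -> P s k <= P s j.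
Proof.
move=> s0; elim: j => [|j IH]; first by rewrite leqn0 => /eqP ->.
rewrite leq_eqVlt => /orP [/eqP -> //|]; rewrite ltnS => /IH h.
exact: le_trans h (ltW (P_lt _ s0)).
Qed.

Lemma P_ge s k : 0 <= s -> s <= P s k.
Proof. by move=> s0; apply: (@P_mono s 0 k s0). Qed.

Lemma P_le s t k : 0 <= s -> s <= t -> (k <= Nst T s t)%N -> P s k <= t.
Proof.
move=> s0 st; case: k => [//|k] hk; rewrite TsE //.
have hm := NMono s0 st.
have /andP [h _] := NEx (le_trans s0 st).
apply: le_trans h; apply: Tle.
move: hk; rewrite /Nst; lia.
Qed.

Lemma xsE s k : 0 <= s -> xs_ T x s k = x (N s + k).
Proof.
move=> s0; rewrite /xs_ /xt; case: k => [|k]; first by rewrite addn0.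
by rewrite TsE // NT.
Qed.

Lemma N_in s u n : 0 <= s -> s <= u -> P s n <= u < P s n.+1 -> N u = (N s + n)%N.
Proof.
move=> s0 su /andP [h1 h2]; apply: NSpec.
rewrite -addnS -(TsE s (ltn0Sn n)) h2 andbT.
case: n h1 {h2} => [|n] h1; last by rewrite -(TsE s (ltn0Sn n)).
have /andP [h _] := NEx s0.
by rewrite addn0; apply: le_trans h su.
Qed.

Lemma Vform s u n : N u = (N s + n)%N ->
  V s u = opprod (Fs s) n \o G (x (N s + n)) (P s n) u.
Proof. by move=> h; rewrite /rand_evol /Nst /xt h addKn. Qed.

Lemma A_bl s n : J s -> J (P s n) -> bounded_linear_op (opprod (Fs s) n).
Proof.
move=> Js Jn; have s0 := J_ge0 Js.
apply: opprod_bl => k /andP [k0 kn]; rewrite /Fs.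
apply: bl_comp; last exact: (hD _ _).1.
have h1 : P s k <= P s n by apply: P_mono.
have h2 : P s k.-1 <= P s k by apply: P_mono => //; apply: leq_pred.
apply: (hG _).1.
- exact: J_itv Js Jn (@P_ge s k.-1 s0) (le_trans h2 h1).
- exact: J_itv Js Jn (@P_ge s k s0) h1.
- exact: h2.
Qed.


Lemma P_J s t k : J s -> J t -> s <= t -> (k <= Nst T s t)%N -> J (P s k).
Proof.
move=> Js Jt st hk; have s0 := J_ge0 Js.
exact: J_itv Js Jt (@P_ge s k s0) (P_le s0 st hk).
Qed.

Lemma NstE s t : J s -> s <= t -> N t = (N s + Nst T s t)%N.
Proof. by move=> Js st; rewrite /Nst subnKC // NMono // J_ge0. Qed.

Lemma V_bl s t : J s -> J t -> s <= t -> bounded_linear_op (V s t).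
Proof.
move=> Js Jt st; rewrite (Vform (NstE Js st)).
apply: bl_comp; first by apply: A_bl => //; apply: P_J Jt st _.
apply: (hG _).1 => //; first by apply: P_J Jt st _.
by apply: P_le => //; apply: J_ge0.
Qed.

Lemma V_id t : J t -> V t t = id.
Proof.
move=> Jt; rewrite (@Vform t t 0) ?addn0 //.
by apply: funext => f /=; rewrite (hG _).2.1.
Qed.


Lemma V_comp s r t : J s -> J r -> J t -> s <= r -> r <= t -> V s r \o V r t = V s t.
Proof.
move=> Js Jr Jt sr rt; have s0 := J_ge0 Js; have r0 := J_ge0 Jr.
have hr := NstE Js sr; have ht := NstE Jr rt.
set n1 := Nst T s r in hr *.
have Jn1 : J (P s n1) by apply: P_J Jr sr _.
have Pn1 : P s n1 <= r by apply: P_le.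
case: (posnP (Nst T r t)) => hm.
  rewrite hm addn0 in ht.
  have ht2 : N t = (N s + n1)%N by rewrite ht.
  rewrite (Vform hr) (@Vform r t 0) ?addn0 // (Vform ht2).
  apply: funext => f /=; rewrite -hr.
  have := (hG (x (N r))).2.2 (P s n1) r t Jn1 Jr Jt Pn1 rt.
  by move/(congr1 (fun h => h f)) => /= ->.
set m := (Nst T r t).-1.
have hm' : Nst T r t = m.+1 by rewrite /m prednK.
rewrite hm' in ht.
have ht2 : N t = (N s + (n1 + m.+1))%N by rewrite ht hr addnA.
rewrite (Vform hr) (Vform ht) (Vform ht2).
rewrite (opprod_shift (Fs s) n1 m.+1) (opprod1 (Fs r) m) (opprod1 (fun k => Fs s (n1 + k)) m).
have hP j : (0 < j)%N -> P r j = P s (n1 + j).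
  by move=> j0; rewrite !TsE ?addn_gt0 ?j0 ?orbT // hr addnA.
have hx j : xs_ T x r j = xs_ T x s (n1 + j).
  by rewrite !xsE // hr addnA.
have hQ : opprod (fun k : nat => Fs r k.+1) m = opprod (fun k : nat => Fs s (n1 + k.+1)) m.
  apply: opprod_ext => k /andP [k0 _]; rewrite /Fs addnS /=.
  by rewrite !hx (hP k) // hr -addnA !addnS.
have key : G (x (N s + n1)) (P s n1) r \o Fs r 1 = Fs s (n1 + 1).
  rewrite /Fs /= !hx !addn0 !addn1 hr [xs_ _ _ _ n1]xsE //=.
  rewrite addnS.
  have rT : r < T (N s + n1).+1.
    by rewrite -hr; have /andP [] := NEx r0.
  have JT : J (T (N s + n1).+1).
    apply: (J_itv Jr Jt (ltW rT)).
    have /andP [h _] := NEx (le_trans r0 rt); apply: le_trans h; apply: Tle.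
    rewrite ht2; lia.
  have := (hG (x (N s + n1))).2.2 (P s n1) r _ Jn1 Jr JT Pn1 (ltW rT).
  by move=> <-.
rewrite hQ -(hP m.+1) // hr -addnA -key.
by [].
Qed.


Section Reg.
Hypothesis hcont : forall z a, J a -> forall f,
  {within Jfrom J a, continuous (fun u => G z a u f)}.

Lemma LL s t n g : J s -> J t -> P s n < t -> t <= P s n.+1 ->
  left_lim (Jfrom J s) (fun u => V s u g) t
    (opprod (Fs s) n (G (x (N s + n)) (P s n) t g)).
Proof.
move=> Js Jt h1 h2; have s0 := J_ge0 Js.
have JPn : J (P s n) by apply: J_itv Js Jt (@P_ge s n s0) (ltW h1).
have [M [M0 hM]] := bl_bound (A_bl Js JPn).
have hA := A_bl Js JPn.
move=> e e0.
have tI : Jfrom J (P s n) t by split => //; apply: ltW.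
have [d0 [d00 hd0]] := within_cont_ed (@hcont (x (N s + n)) _ JPn g) tI (divr_gt0 e0 M0).
exists (Num.min d0 (t - P s n)); split.
  by rewrite lt_min d00 subr_gt0 h1.
move=> u [Ju su] /andP [hu1 hu2].
have hm1 : Num.min d0 (t - P s n) <= d0 by rewrite ge_min lexx.
have hm2 : Num.min d0 (t - P s n) <= t - P s n by rewrite ge_min lexx orbT.
have hPu : P s n < u by lra.
have hNu : N u = (N s + n)%N.
  apply: N_in => //; rewrite (ltW hPu) /=; exact: lt_le_trans hu2 h2.
rewrite (Vform hNu) /= bl_sub //.
apply: le_lt_trans (hM _) _.
rewrite -ltr_pdivlMl // mulrC.
apply: hd0; first by split => //; apply: ltW.
rewrite ltr0_norm ?subr_lt0 //; lra.
Qed.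

Lemma RC s t f : J s -> J t -> s <= t -> forall e : R, 0 < e -> exists d : R, 0 < d /\ forall u, Jfrom J s u -> t <= u < t + d -> `|V s u f - V s t f| < e.
Proof.
move=> Js Jt st e e0; have s0 := J_ge0 Js; have t0 := le_trans s0 st.
have ht := NstE Js st; set n := Nst T s t in ht.
have JPn : J (P s n) by apply: P_J Jt st _.
have Pnt : P s n <= t by apply: P_le.
have [M [M0 hM]] := bl_bound (A_bl Js JPn).
have hA := A_bl Js JPn.
have tI : Jfrom J (P s n) t by split.
have [d0 [d00 hd0]] := within_cont_ed (@hcont (x (N s + n)) _ JPn f) tI (divr_gt0 e0 M0).
have /andP [hN1 hN2] := NEx t0.
exists (Num.min d0 (T (N t).+1 - t)); split.
  by rewrite lt_min d00 subr_gt0 hN2.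
move=> u [Ju su] /andP [hu1 hu2].
have hm1 : Num.min d0 (T (N t).+1 - t) <= d0 by rewrite ge_min lexx.
have hm2 : Num.min d0 (T (N t).+1 - t) <= T (N t).+1 - t by rewrite ge_min lexx orbT.
have hNu : N u = (N s + n)%N.
  rewrite -ht; apply: NSpec; apply/andP; split; first exact: le_trans hN1 hu1.
  lra.
rewrite (Vform hNu) (Vform ht) /= bl_sub //.
apply: le_lt_trans (hM _) _.
rewrite -ltr_pdivlMl // mulrC.
apply: hd0; first by split => //; apply: le_trans Pnt hu1.
rewrite ger0_norm ?subr_ge0 //; lra.
Qed.


Lemma bracket s t : J s -> J t -> s < t -> exists n, P s n < t <= P s n.+1.
Proof.
move=> Js Jt st; have s0 := J_ge0 Js; have t0 := le_trans s0 (ltW st).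
have ht := NstE Js (ltW st); set k := Nst T s t in ht.
have Pk : P s k <= t by apply: P_le => //; apply: ltW.
case: (ltP (P s k) t) => hk.
  exists k; rewrite hk /= addnS -ht.
  by have /andP [_ h] := NEx t0; apply: ltW.
have ePk : P s k = t by apply/eqP; rewrite eq_le Pk hk.
case: k ht Pk hk ePk => [|k] ht Pk hk ePk.
  by move: st; rewrite -ePk /= ltxx.
by exists k; rewrite -ePk lexx andbT P_lt.
Qed.

Lemma RCLL_V s f : J s -> RCLL (Jfrom J s) (fun u => V s u f).
Proof.
move=> Js t [Jt st]; split.
  move=> e e0; have [d [d0 hd]] := RC f Js Jt st e0.
  by exists d; split.
move=> [u [[Ju su] ut]].
have [n /andP [h1 h2]] := bracket Js Jt (le_lt_trans su ut).
by eexists; apply: LL h1 h2.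
Qed.

Lemma claim2 s f u : J s -> Jfrom J s u -> s < u -> (forall n, u <> P s n) ->
  left_lim (Jfrom J s) (fun u' => V s u' f) u (V s u f).
Proof.
move=> Js [Ju _] su hn; have s0 := J_ge0 Js.
have [n /andP [h1 h2]] := bracket Js Ju su.
have h2' : u < P s n.+1 by rewrite lt_neqAle h2 andbT; apply/eqP; apply: hn.
have hNu : N u = (N s + n)%N by apply: N_in => //; [apply: ltW | rewrite (ltW h1)].
rewrite (Vform hNu); exact: LL h1 h2.
Qed.

Lemma claim3 s f n : J s -> J (P s n.+1) ->
  left_lim (Jfrom J s)
    (fun u' => V s u' (D (xs_ T x s n) (xs_ T x s n.+1) f))
    (P s n.+1) (V s (P s n.+1) f).
Proof.
move=> Js Jt; have s0 := J_ge0 Js.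
have hNt : N (P s n.+1) = (N s + n.+1)%N by rewrite TsE // NT.
have -> : V s (P s n.+1) f = opprod (Fs s) n
    (G (x (N s + n)) (P s n) (P s n.+1) (D (xs_ T x s n) (xs_ T x s n.+1) f)).
  rewrite (Vform hNt) /= (hG _).2.1 // /Fs /= xsE //.
exact: LL Js Jt (P_lt _ s0) (lexx _).
Qed.

End Reg.

End Evol.

Unset Implicit Arguments.

Theorem proposition3p3 (R : realType) (Y Y1 : completeNormedModType R)
  (i : Y1 -> Y) (X : finType) (Omega : Type) (J : set R)
  (Gam : X -> R -> R -> Y -> Y) (D : X -> X -> Y -> Y)
  (tau : nat -> Omega -> R) (x : nat -> Omega -> X) :
  separable_space Y -> separable_space Y1 -> cont_embedding i ->
  time_domain J ->
  (forall z : X, is_Ysemigroup J (Gam z)) ->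
  (forall z z' : X, contraction_op (D z z')) ->
  (forall (k : nat) (w : Omega), 0 < tau k.+1 w) ->
  (forall (w : Omega) (q : rat),
      exists n : nat, ratr q < jump_times (fun k => tau k w) n) ->
  forall (s : R) (w : Omega), J s ->
  let T := jump_times (fun k => tau k w) in
  let V := rand_evol Gam D T (fun n => x n w) in
  is_Ysemigroup J V /\
  ((forall z : X, regular_semigroup i J (Gam z)) ->
   forall f : Y,
     RCLL (Jfrom J s) (fun u => V s u f) /\
     (forall u, Jfrom J s u -> s < u -> (forall n : nat, u <> Ts T s n) ->
        left_lim (Jfrom J s) (fun u' => V s u' f) u (V s u f)) /\
     (forall n : nat, J (Ts T s n.+1) ->
        left_lim (Jfrom J s)
          (fun u' => V s u' (D (xs_ T (fun m => x m w) s n)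
                               (xs_ T (fun m => x m w) s n.+1) f))
          (Ts T s n.+1) (V s (Ts T s n.+1) f))).
Proof.
Proof.
move=> _ _ _ hJ hG hD hpos hq s w Js; cbv zeta.
have [hT0 hTS hTub] := jt_props (fun k => hpos k w) (hq w).
split.
  split; [|split].
  - by move=> a b Ja Jb ab; apply: V_bl => //; exact: hJ.
  - by move=> t Jt; exact: (V_id _ _ _ hG Jt).
  - by move=> a r b Ja Jr Jb ar rb; apply: V_comp => //; exact: hJ.
move=> hreg f.
have hcont : forall z a, J a -> forall f,
    {within Jfrom J a, continuous (fun u => Gam z a u f)}.
  by move=> z a Ja g; apply: (hreg z).2.2.2.1.
split; first by apply: RCLL_V => //; exact: hJ.
split.
  by move=> u hu su hn; apply: claim2 => //; exact: hJ.
by move=> n Jn; apply: claim3 => //; exact: hJ.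
Qed.
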